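(* Let $n\ge2$ and let $e_1,\dots,e_n$ be the canonical basis of $\mathbb{R}^n$, $\Lambda=\mathbb{Z}^n$. For $1\le i\le n-1$ let $C_i=\mathrm{diag}(1,\dots,1,-1,1,\dots,1)$ be the diagonal matrix with $-1$ in position $i$ and $1$ elsewhere, and let $c_i=\tfrac12 e_{i+1}+\sum_{j=1}^{i-1}c_{ji}e_j$ with arbitrary choices $c_{ji}\in\{0,\tfrac12\}$. Then the subgroup $\Gamma$ of $I(\mathbb{R}^n)$ generated by $\{C_iL_{c_i}:1\le i\le n-1\}\cup\{L_{e_j}:1\le j\le n\}$ is a Bieberbach group (i.e. a discrete, cocompact, torsion-free subgroup of $I(\mathbb{R}^n)$).
   Context: $I(\mathbb{R}^n)\simeq\mathrm{O}(n)\ltimes\mathbb{R}^n$ is the isometry group of Euclidean space; for $B\in\mathrm{O}(n)$ and $b\in\mathbb{R}^n$, $BL_b$ denotes the isometry $x\mapsto B(x+b)$, and $L_b$ is translation by $b$. The set of groups obtained in this way (over all choices of the $c_{ji}$) is denoted $\mathcal{K}_n$. *)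

(* Defs.v *)
From HB Require Import structures.
From mathcomp Require Import all_boot all_order all_algebra.
From mathcomp Require Import all_classical all_reals all_analysis.
Set Implicit Arguments. Unset Strict Implicit. Unset Printing Implicit Defensive.
Import Order.TTheory GRing.Theory Num.Theory.
Import numFieldNormedType.Exports.
Local Open Scope ring_scope.
Local Open Scope classical_set_scope.

(* Affine maps of R^n (column vectors) in matrix form: (A, t) acts as x |-> A x + t.
   The paper's B L_b (x |-> B (x + b)) is the pair (B, B b). *)
Notation aff R n := ('M[R]_n * 'cV[R]_n)%type.

Definition act (R : realType) (n : nat) (g : aff R n) (x : 'cV[R]_n) : 'cV[R]_n :=
  g.1 *m x + g.2.

Definition is_isometry (R : realType) (n : nat) (g : aff R n) : Prop :=
  g.1^T *m g.1 = 1%:M.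

Definition aff_id (R : realType) (n : nat) : aff R n := (1%:M, 0).
Definition aff_comp (R : realType) (n : nat) (g h : aff R n) : aff R n :=
  (g.1 *m h.1, g.1 *m h.2 + g.2).
Definition aff_inv (R : realType) (n : nat) (g : aff R n) : aff R n :=
  (invmx g.1, - (invmx g.1 *m g.2)).

Definition BL (R : realType) (n : nat) (B : 'M[R]_n) (b : 'cV[R]_n) : aff R n :=
  (B, B *m b).
Definition L (R : realType) (n : nat) (b : 'cV[R]_n) : aff R n := (1%:M, b).

Inductive generated (R : realType) (n : nat) (S : set (aff R n)) : aff R n -> Prop :=
  | gen_base g : S g -> generated S g
  | gen_id : generated S (aff_id R n)
  | gen_comp g h : generated S g -> generated S h -> generated S (aff_comp g h)
  | gen_inv g : generated S g -> generated S (aff_inv g).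

Fixpoint aff_pow (R : realType) (n : nat) (g : aff R n) (k : nat) : aff R n :=
  match k with 0 => aff_id R n | k'.+1 => aff_comp g (aff_pow g k') end.

(* Discrete: every point of G is isolated in G, for the topology of
   I(R^n) = O(n) |x R^n (induced by the product topology on M_n(R) x R^n). *)
Definition discrete_subset (R : realType) (n : nat) (G : set (aff R n)) : Prop :=
  forall g, G g -> exists U : set (aff R n), nbhs g U /\ (forall h, G h -> U h -> h = g).

(* Cocompact: R^n / G is compact, i.e. some compact K has G-translates covering R^n *)
Definition cocompact (R : realType) (n : nat) (G : set (aff R n)) : Prop :=
  exists K : set 'cV[R]_n, compact K /\
    forall x : 'cV[R]_n, exists g, exists y, G g /\ K y /\ x = act g y.

Definition torsion_free (R : realType) (n : nat) (G : set (aff R n)) : Prop :=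
  forall g k, G g -> (0 < k)%N -> aff_pow g k = aff_id R n -> g = aff_id R n.

Definition bieberbach (R : realType) (n : nat) (G : set (aff R n)) : Prop :=
  (forall g, G g -> is_isometry g) /\
  discrete_subset G /\ cocompact G /\ torsion_free G.

(* canonical basis vector e_j (0-based index j) *)
Definition e (R : realType) (n : nat) (j : 'I_n) : 'cV[R]_n := delta_mx j 0.

Definition Cmat (R : realType) (n : nat) (i : 'I_n) : 'M[R]_n :=
  \matrix_(k, l) (if k == l then (if k == i then -1 else 1) else 0).

(* c_i = 1/2 e_{i+1} + sum_{j < i} c_{ji} e_j  (0-based; i+1 < n) *)
Definition cvec (R : realType) (n : nat) (c : 'I_n -> 'I_n -> R) (i : 'I_n)
  (ip : 'I_n) : 'cV[R]_n :=
  2^-1 *: e R ip + \sum_(j < n | (j < i)%N) c j i *: e R j.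

Definition gens (R : realType) (n : nat) (c : 'I_n -> 'I_n -> R) : set (aff R n) :=
  [set g : aff R n | (exists (i ip : 'I_n), val ip = (val i).+1 /\ g = BL (Cmat R i) (cvec c i ip))
        \/ (exists j : 'I_n, g = L (e R j))].

Definition Gamma (R : realType) (n : nat) (c : 'I_n -> 'I_n -> R) : set (aff R n) :=
  generated (gens c).

(* Main.v *)
Require Import Defs.
From mathcomp Require Import all_boot all_order all_algebra.
From mathcomp Require Import all_classical all_reals all_analysis.
From mathcomp Require Import ring lra zify.
Import Order.TTheory GRing.Theory Num.Theory.
Import numFieldNormedType.Exports.
Set Implicit Arguments. Unset Strict Implicit. Unset Printing Implicit Defensive.
Local Open Scope ring_scope.

Definition sg (R : realType) (b : bool) : R := if b then -1 else 1.
Definition Dm (R : realType) n (a : 'I_n -> bool) : 'M[R]_n := diag_mx (\row_k sg R (a k)).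
Definition beta (R : realType) n (c : 'I_n -> 'I_n -> R) (k m : 'I_n) : bool :=
  (val m == (val k).+1) (+) ((val m < val k)%N && (c m k == 2^-1)).
Definition par (R : realType) n (c : 'I_n -> 'I_n -> R) (a : 'I_n -> bool) (m : 'I_n) : bool :=
  \big[addb/false]_(k < n) (a k && beta c k m).
Definition Inv (R : realType) n (c : 'I_n -> 'I_n -> R) (g : aff R n) : Prop :=
  exists a : 'I_n -> bool, g.1 = Dm R a /\ (forall k : 'I_n, a k -> (val k).+1 < n)%N /\
    (forall m, g.2 m 0 - (par c a m)%:R / 2 \is a Num.int).

Lemma sgM (R : realType) x y : sg R x * sg R y = sg R (x (+) y).
Proof. by case: x; case: y; rewrite /sg /= ?mulrN ?mulNr ?mulr1 ?opprK. Qed.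

Lemma DmM (R : realType) n (a b : 'I_n -> bool) :
  Dm R a *m Dm R b = Dm R (fun k => a k (+) b k).
Proof. by rewrite /Dm mulmx_diag; congr diag_mx; apply/rowP => k; rewrite !mxE sgM. Qed.

Lemma Dm0 (R : realType) n : Dm R (fun _ : 'I_n => false) = 1%:M.
Proof.
rewrite /Dm -diag_const_mx; congr diag_mx; apply/rowP => k; by rewrite !mxE.
Qed.

Lemma DmDm (R : realType) n (a : 'I_n -> bool) : Dm R a *m Dm R a = 1%:M.
Proof.
rewrite DmM -(Dm0 R n); congr Dm; apply: funext => k; exact: addbb.
Qed.

Lemma invDm (R : realType) n (a : 'I_n -> bool) : invmx (Dm R a) = Dm R a.
Proof.
have [U _] := mulmx1_unit (DmDm R a).
by rewrite -[RHS]mul1mx -(mulVmx U) -mulmxA DmDm mulmx1.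
Qed.

Lemma Dm_entry (R : realType) n (a : 'I_n -> bool) (t : 'cV[R]_n) m :
  (Dm R a *m t) m 0 = sg R (a m) * t m 0.
Proof. by rewrite /Dm mul_diag_mx !mxE. Qed.

Lemma par_add (R : realType) n (c : 'I_n -> 'I_n -> R) a b m :
  par c (fun k => a k (+) b k) m = par c a m (+) par c b m.
Proof.
rewrite /par -big_split /=; apply: eq_bigr => k _; exact: andb_addl.
Qed.

Lemma int_half (R : realType) (s p q : bool) :
  sg R s * p%:R / 2 + q%:R / 2 - (p (+) q)%:R / 2 \is a Num.int.
Proof.
case: s; case: p; case: q; rewrite /sg /=.
all: apply/intrP.
- by exists 0; field.
- by exists (-1); field.
- by exists 0; field.
- by exists 0; field.
- by exists 1; field.
- by exists 0; field.
- by exists 0; field.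
- by exists 0; field.
Qed.

Lemma int_half2 (R : realType) (s p : bool) :
  sg R s * p%:R / 2 + p%:R / 2 \is a Num.int.
Proof.
case: s; case: p; rewrite /sg /=; apply/intrP.
- by exists 0; field.
- by exists 0; field.
- by exists 1; field.
- by exists 0; field.
Qed.

Lemma sg_int (R : realType) b : sg R b \is a Num.int.
Proof. by apply/intrP; exists (if b then -1 else 1); case: b. Qed.

Lemma par0 (R : realType) n (c : 'I_n -> 'I_n -> R) m : par c (fun _ => false) m = false.
Proof. by rewrite /par big1. Qed.

Lemma e_entry (R : realType) n (j m : 'I_n) (l : 'I_1) : e R j m l = (m == j)%:R.
Proof. by rewrite /e mxE; case: l => [[|k] Hk] //=; rewrite andbT. Qed.

Lemma Inv_L (R : realType) n (c : 'I_n -> 'I_n -> R) (t : 'cV[R]_n) :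
  (forall m, t m 0 \is a Num.int) -> Inv c (L t).
Proof.
move=> Ht; exists (fun _ => false); split; first by rewrite Dm0.
split=> // m; by rewrite par0 /= mul0r subr0.
Qed.

Lemma Inv_comp (R : realType) n (c : 'I_n -> 'I_n -> R) g h :
  Inv c g -> Inv c h -> Inv c (aff_comp g h).
Proof.
move=> [a [Ha1 [Ha2 Ha3]]] [b [Hb1 [Hb2 Hb3]]].
exists (fun k => a k (+) b k); split; first by rewrite /= Ha1 Hb1 DmM.
split.
  move=> k; case Ea: (a k) => /= Hk; [by apply: Ha2; rewrite Ea | exact: Hb2].
move=> m; rewrite /= mxE Ha1 Dm_entry par_add.
set x := h.2 m 0; set y := g.2 m 0.
have -> : sg R (a m) * x + y - (par c a m (+) par c b m)%:R / 2 =
  sg R (a m) * (x - (par c b m)%:R / 2) + (y - (par c a m)%:R / 2) +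
  (sg R (a m) * (par c b m)%:R / 2 + (par c a m)%:R / 2 - (par c b m (+) par c a m)%:R / 2).
  rewrite addbC; ring.
apply: rpredD; last exact: int_half.
apply: rpredD; last exact: Ha3.
apply: rpredM; [exact: sg_int | exact: Hb3].
Qed.

Lemma Inv_inv (R : realType) n (c : 'I_n -> 'I_n -> R) g :
  Inv c g -> Inv c (aff_inv g).
Proof.
move=> [a [Ha1 [Ha2 Ha3]]].
exists a; split; first by rewrite /= Ha1 invDm.
split=> // m; rewrite /= mxE Ha1 invDm Dm_entry.
set x := g.2 m 0.
have -> : - (sg R (a m) * x) - (par c a m)%:R / 2 =
  - (sg R (a m) * (x - (par c a m)%:R / 2)) - 
  (sg R (a m) * (par c a m)%:R / 2 + (par c a m)%:R / 2) by ring.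
apply: rpredB; last exact: int_half2.
rewrite rpredN; apply: rpredM; [exact: sg_int | exact: Ha3].
Qed.

Lemma Cmat_Dm (R : realType) n (i : 'I_n) : Cmat R i = Dm R (fun k => k == i).
Proof.
apply/matrixP => k l; rewrite /Cmat /Dm !mxE.
case: eqP => [->|]; rewrite ?mulr1n ?mulr0n //.
Qed.

Lemma cvec_entry (R : realType) n (c : 'I_n -> 'I_n -> R) (i ip m : 'I_n) :
  cvec c i ip m 0 = (m == ip)%:R / 2 + (if (m < i)%N then c m i else 0).
Proof.
rewrite /cvec !mxE summxE andbT mulrC; congr (_ + _).
rewrite big_mkcond /=.
rewrite (bigD1 m) //= big1 ?addr0.
  case: ifP => // _. by rewrite mxE e_entry eqxx mulr1.
move=> k /negPf Hk; case: ifP => // _; by rewrite mxE e_entry eq_sym Hk mulr0.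
Qed.

Lemma par_gen (R : realType) n (c : 'I_n -> 'I_n -> R) (i m : 'I_n) :
  par c (fun k => k == i) m = beta c i m.
Proof.
rewrite /par (bigD1 i) //= big1 ?addbF ?eqxx // => k /negPf -> //.
Qed.

Lemma Inv_C (R : realType) n (c : 'I_n -> 'I_n -> R) (i ip : 'I_n) :
  (forall j i : 'I_n, (j < i)%N -> c j i = 0 \/ c j i = 2^-1) ->
  val ip = (val i).+1 -> Inv c (BL (Cmat R i) (cvec c i ip)).
Proof.
move=> hc Hip; exists (fun k => k == i); split; first by rewrite /= Cmat_Dm.
split; first by move=> k /eqP ->; rewrite -Hip ltn_ord.
move=> m; rewrite /= Cmat_Dm Dm_entry cvec_entry par_gen /beta.
have -> : (m == ip) = (val m == (val i).+1) by rewrite -Hip.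
case: (eqVneq m i) => [->|Hmi].
  rewrite !ltnn /= (ltn_eqF (ltnSn _)) /= mul0r addr0 mulr0 subr0; exact: rpred0.
rewrite /sg mul1r.
case: (ltnP m i) => Hlt.
  have -> : (val m == (val i).+1) = false.
    change ((nat_of_ord m == (nat_of_ord i).+1) = false); apply/negbTE/eqP; lia.
  rewrite /= mul0r add0r.
  case: (hc m i Hlt) => ->.
    have -> : ((0:R) == 2^-1) = false.
      by apply/negbTE; rewrite eq_sym invr_eq0 pnatr_eq0.
    by rewrite /= mul0r subr0 rpred0.
  by rewrite eqxx /= mul1r subrr rpred0.
rewrite andFb addbF addr0.
by case: (val m == (val i).+1); rewrite /= ?mul0r subrr rpred0.
Qed.

Lemma Inv_Gamma (R : realType) n (c : 'I_n -> 'I_n -> R) g :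
  (forall j i : 'I_n, (j < i)%N -> c j i = 0 \/ c j i = 2^-1) ->
  Gamma c g -> Inv c g.
Proof.
move=> hc; elim.
- move=> h [[i [ip [Hip ->]]] | [j ->]].
    exact: Inv_C.
  by apply: Inv_L => m; rewrite e_entry; apply: rpred_nat.
- by apply: (@Inv_L R n c 0) => m; rewrite mxE rpred0.
- by move=> g1 h1 _ H1 _ H2; apply: Inv_comp.
- by move=> g1 _ H1; apply: Inv_inv.
Qed.

Lemma Inv_iso (R : realType) n (c : 'I_n -> 'I_n -> R) g : Inv c g -> is_isometry g.
Proof.
move=> [a [Ha1 _]]; rewrite /is_isometry Ha1 /Dm tr_diag_mx -/(Dm R a); exact: DmDm.
Qed.

Lemma pow_entry (R : realType) n (g : aff R n) a m k :
  g.1 = Dm R a -> a m = false -> (aff_pow g k).2 m 0 = k%:R * g.2 m 0.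
Proof.
move=> Ha Am; elim: k => [|k IH] /=; first by rewrite mxE mul0r.
rewrite mxE Ha Dm_entry Am IH /sg mul1r -natr1; ring.
Qed.

Lemma ord1_0 (l : 'I_1) : l = 0.
Proof. by apply: val_inj; case: l => [[|k] Hk]. Qed.

Lemma Gamma_torsion (R : realType) n (c : 'I_n -> 'I_n -> R) :
  (forall j i : 'I_n, (j < i)%N -> c j i = 0 \/ c j i = 2^-1) ->
  torsion_free (Gamma c).
Proof.
move=> hc g k Gg k0 Hk.
have [a [Ha1 [Ha2 Ha3]]] := Inv_Gamma hc Gg.
have T0 : forall m, a m = false -> g.2 m 0 = 0.
  move=> m Am; have := pow_entry k Ha1 Am; rewrite Hk /aff_id /= mxE => /esym/eqP.
  by rewrite mulf_eq0 pnatr_eq0 eqn0Ngt k0 /= => /eqP.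
case: (pselect (exists k, a k)) => [[k1 Hk1]|Hno].
  case: (arg_maxP (fun i : 'I_n => val i) Hk1) => i Hai Hmax.
  have Hi1 := Ha2 i Hai; pose m := Ordinal Hi1.
  have Am : a m = false.
    apply/negbTE/negP => Am; have := Hmax m Am; rewrite /= leEnat; lia.
  have Pm : par c a m = true.
    rewrite /par (bigD1 i) //= Hai /beta /= eqxx /= ltnNge leqnSn /= big1 //.
    move=> j Hji; case Aj: (a j) => //=; have Hle : (nat_of_ord j <= nat_of_ord i)%N := Hmax j Aj.
    have Hne : (nat_of_ord j != nat_of_ord i) by [].
    rewrite (_ : (i.+1 == j.+1) = false); last by apply/negbTE; rewrite eqSS eq_sym; exact: Hji.
    by rewrite ltnNge (leq_trans Hle (leqnSn _)).
  have := Ha3 m; rewrite (T0 m Am) Pm => /intrP [z Hz].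
  have : ((z * 2)%:~R : R) = (-1)%:~R.
    by rewrite intrM -Hz /=; field.
  move/intr_inj; lia.
have Af : a = fun _ => false.
  by apply: funext => j; apply/negbTE/negP => Aj; apply: Hno; exists j.
case: g Gg Hk Ha1 Ha3 T0 => D t /= _ _ -> _ T0; rewrite /aff_id Af Dm0; congr pair.
apply/matrixP => m l; rewrite (ord1_0 l) mxE; apply: T0; by rewrite Af.
Qed.

Lemma int_small (R : realType) (z : int) : -2^-1 < (z%:~R : R) < 2^-1 -> z = 0.
Proof.
move=> /andP [h1 h2].
have h3 : ((-1)%:~R : R) < z%:~R by rewrite rmorphN1; lra.
have h4 : (z%:~R : R) < 1%:~R by rewrite rmorph1; lra.
move: h3 h4; rewrite !ltr_int; lia.
Qed.

Lemma Gamma_discrete (R : realType) n (c : 'I_n -> 'I_n -> R) :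
  (forall j i : 'I_n, (j < i)%N -> c j i = 0 \/ c j i = 2^-1) ->
  discrete_subset (Gamma c).
Proof.
move=> hc g Gg; exists (ball g (2^-1)); split.
  by apply: nbhsx_ballx; rewrite invr_gt0.
move=> h Gh [B1 B2].
have [a [Ha1 [_ Ha3]]] := Inv_Gamma hc Gg.
have [b [Hb1 [_ Hb3]]] := Inv_Gamma hc Gh.
move: B1 B2; rewrite /ball /= => -[_ B1] -[_ B2].
have ab : b = a.
  apply: funext => k; have := B1 k k; rewrite -ball_normE /= Ha1 Hb1 /Dm !mxE eqxx !mulr1n /sg.
  by case: (a k); case: (b k) => //; rewrite ltr_norml; lra.
case: h Gh Hb1 Hb3 B1 B2 => D t /= _ -> Hb3 _ B2; case: g Gg Ha1 Ha3 B2 => D' t' /= _ -> Ha3 B2.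
rewrite ab; congr pair; apply/matrixP => m l; rewrite (ord1_0 l).
have := B2 m 0; rewrite -ball_normE /= ltr_norml.
have /intrP [z1 Hz1] := Ha3 m; have /intrP [z2 Hz2] := Hb3 m; rewrite ab in Hz2.
have -> : t' m 0 - t m 0 = (z1 - z2)%:~R by rewrite intrB -Hz1 -Hz2; ring.
move/int_small => /eqP; rewrite subr_eq0 => /eqP E.
by rewrite -[t' m 0](subrK ((par c a m)%:R / 2)) -[t m 0](subrK ((par c a m)%:R / 2)) Hz1 Hz2 E.
Qed.

Lemma L_add (R : realType) n (u v : 'cV[R]_n) : aff_comp (L v) (L u) = L (u + v).
Proof. by rewrite /aff_comp /L /= !mul1mx. Qed.

Lemma Gamma_Lint (R : realType) n (c : 'I_n -> 'I_n -> R) j (z : int) :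
  Gamma c (L (z%:~R *: e R j)).
Proof.
have Hn : forall k : nat, Gamma c (L (k%:R *: e R j)).
  elim=> [|k IH]; first by rewrite scale0r; exact: gen_id.
  rewrite -natr1 scalerDl scale1r -L_add; apply: gen_comp => //.
  by apply: gen_base; right; exists j.
case: z => k; first exact: Hn.
rewrite NegzE intrN scaleNr.
have -> : L (- (k.+1%:~R *: e R j)) = aff_inv (L (k.+1%:~R *: e R j)).
  by rewrite /aff_inv /L /= invmx1 mul1mx.
exact/gen_inv/Hn.
Qed.

Lemma Gamma_L (R : realType) n (c : 'I_n -> 'I_n -> R) (u : 'cV[R]_n) :
  (forall m, u m 0 \is a Num.int) -> Gamma c (L u).
Proof.
move=> Hu.
have -> : u = \sum_(j < n) u j 0 *: e R j.
  apply/matrixP => m l; rewrite (ord1_0 l) summxE (bigD1 m) //= big1 ?addr0.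
    by rewrite mxE e_entry eqxx mulr1.
  by move=> k Hk; rewrite mxE e_entry eq_sym (negbTE Hk) mulr0.
apply: (big_ind (fun v => Gamma c (L v))).
- exact: gen_id.
- by move=> x y Hx Hy; rewrite -L_add; apply: gen_comp.
- by move=> j _; have /intrP [z ->] := Hu j; apply: Gamma_Lint.
Qed.

Lemma trmx_cont (R : realType) n : continuous (@trmx R 1 n).
Proof.
move=> x A /nbhs_ballP [e0 ep H]; apply/nbhs_ballP; exists e0 => // y.
rewrite /ball /= => -[_ B]; apply: H; split => // i j; rewrite !mxE; exact: B.
Qed.

Lemma Gamma_cocompact (R : realType) n (c : 'I_n -> 'I_n -> R) :
  cocompact (Gamma c).
Proof.
pose Kr := [set v : 'rV[R]_n | forall i, `[0, 1]%classic (v ord0 i)]%classic.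
exists [set v^T | v in Kr]%classic; split.
  apply: continuous_compact; first exact/continuous_subspaceT/trmx_cont.
  by apply: (@rV_compact R n (fun _ => `[0, 1]%classic)) => i; exact: segment_compact.
move=> x; pose u : 'cV[R]_n := \col_m (Num.floor (x m 0))%:~R.
exists (L u), (x - u); split; [|split].
- by apply: Gamma_L => m; rewrite mxE; apply/intrP; eexists.
- exists (x - u)^T; last by rewrite trmxK.
  move=> i; rewrite !mxE /= in_itv /=.
  rewrite (ord1_0 ord0); have /andP [h1 h2] := floor_itv (x i 0).
  move: h2; rewrite intrD rmorph1 => h2; apply/andP; split; lra.
- by rewrite /act /L /= mul1mx subrK.
Qed.

Theorem proposition4p1 (R : realType) (n : nat) (c : 'I_n -> 'I_n -> R) :
  (2 <= n)%N ->
  (forall j i : 'I_n, (j < i)%N -> c j i = 0 \/ c j i = 2^-1) ->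
  bieberbach (Gamma c).
Proof.
move=> _ hc; split; first by move=> g Gg; apply: Inv_iso; exact: Inv_Gamma Gg.
split; first exact: Gamma_discrete.
split; first exact: Gamma_cocompact.
exact: Gamma_torsion.
Qed.
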